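(* Let $F$ be a field of characteristic two and let $(A,\sigma)$ be a central simple $F$-algebra with orthogonal involution. If $(A,\sigma)\otimes(M_2(F),\tau)\simeq(M_{2^n}(F),t)$ for some orthogonal involution $\tau$ on $M_2(F)$, then $(A,\sigma)\simeq(M_{2^{n-1}}(F),t)$.
   Context: Involutions are of the first kind; $t$ denotes the transpose involution; $\simeq$ is isomorphism of algebras with involution. *)

(* Defs.v *)
From HB Require Import structures.
From mathcomp Require Import all_boot all_order all_algebra all_field.
Set Implicit Arguments. Unset Strict Implicit. Unset Printing Implicit Defensive.
Import GRing.Theory.
Local Open Scope ring_scope.

Definition central_simple (F : fieldType) (A : falgType F) : Prop :=
  (forall z : A, (forall x : A, z * x = x * z) -> exists k : F, z = k%:A) /\
  (forall I : {vspace A},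
      (forall a x : A, x \in I -> (a * x \in I) && (x * a \in I)) ->
      I = 0%VS \/ I = fullv).

Definition involution1 (F : fieldType) (A : lalgType F) (s : A -> A) : Prop :=
  [/\ forall (k : F) (x y : A), s (k *: x + y) = k *: s x + s y,
      forall x y : A, s (x * y) = s y * s x &
      forall x : A, s (s x) = x].

(* Orthogonal involution in characteristic 2 (KMRT Def. 2.5 / Prop. 2.6):
   an involution of the first kind that is not symplectic, i.e.
   1 is not in Symd(A,s) = { x + s x }. *)
Definition orthogonal_involution (F : fieldType) (A : lalgType F) (s : A -> A)
  : Prop :=
  involution1 s /\ ~ (exists x : A, x + s x = 1).

(* Under the canonical identification A (x)_F M_2(F) = M_2(A)
   (a (x) e_ij |-> the matrix with a in position (i,j)), the tensor product
   involution s (x) tau, given by a (x) X |-> s a (x) tau X. *)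
Definition tensor_inv2 (F : fieldType) (A : falgType F) (s : A -> A)
  (tau : 'M[F]_2 -> 'M[F]_2) (M : 'M[A]_2) : 'M[A]_2 :=
  \matrix_(k < 2, l < 2)
     \sum_(i < 2) \sum_(j < 2) (tau (delta_mx i j) k l) *: s (M i j).

Definition iso_M2A_transpose (F : fieldType) (A : falgType F) (s : A -> A)
  (tau : 'M[F]_2 -> 'M[F]_2) (m : nat) : Prop :=
  exists f : 'M[A]_2 -> 'M[F]_m,
    bijective f /\
    [/\ forall M N, f (M + N) = f M + f N,
        forall (k : F) M, f (map_mx (fun a => k *: a) M) = k *: f M,
        forall M N, f (M *m N) = f M *m f N,
        f 1%:M = 1%:M &
        forall M, f (tensor_inv2 s tau M) = (f M)^T].

Definition iso_transpose (F : fieldType) (A : falgType F) (s : A -> A)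
  (m : nat) : Prop :=
  exists g : A -> 'M[F]_m,
    [/\ bijective g,
        forall (k : F) (x y : A), g (k *: x + y) = k *: g x + g y,
        forall x y : A, g (x * y) = g x *m g y,
        g 1 = 1%:M &
        forall x : A, g (s x) = (g x)^T].

(* Main.v *)
Require Import Defs.
From HB Require Import structures.
From mathcomp Require Import all_boot all_order all_algebra all_field.
From mathcomp Require Import ring zify.
From Stdlib Require Import Classical_Prop.
Set Implicit Arguments. Unset Strict Implicit. Unset Printing Implicit Defensive.
Import GRing.Theory.
Local Open Scope ring_scope.

Section Lin.
Variables (F : fieldType) (V W : lmodType F) (f : V -> W).
Hypothesis hf : forall (k : F) x y, f (k *: x + y) = k *: f x + f y.
Lemma lin0 : f 0 = 0.
Proof.
have h := hf 1 0 0; rewrite scale1r addr0 in h.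
have e : f 0 + f 0 = f 0 + 0 by rewrite addr0 {3}h scale1r.
exact: addrI e.
Qed.
Lemma linD x y : f (x + y) = f x + f y.
Proof. by have := hf 1 x y; rewrite !scale1r. Qed.
Lemma linZ k x : f (k *: x) = k *: f x.
Proof. by rewrite -(addr0 (k *: x)) hf lin0 addr0. Qed.
Lemma linN x : f (- x) = - f x.
Proof. by rewrite -scaleN1r linZ scaleN1r. Qed.
Lemma linB x y : f (x - y) = f x - f y.
Proof. by rewrite linD linN. Qed.
Lemma lin_sum I r (P : pred I) (G : I -> V) :
  f (\sum_(i <- r | P i) G i) = \sum_(i <- r | P i) f (G i).
Proof. exact: (big_morph f linD lin0). Qed.
End Lin.

Lemma ord2_cases (i : 'I_2) : i = ord0 \/ i = ord_max.
Proof. by case: i => [[|[|//]]] Hi; [left|right]; apply/val_inj. Qed.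

Lemma char2_add (F : fieldType) : 2%N \in [pchar F] -> forall x : F, x + x = 0.
Proof. by move=> /andP[_ /eqP h2] x; rewrite -mulr2n -mulr_natr h2 mulr0. Qed.

Lemma big_ord2 (R : nmodType) (G : 'I_2 -> R) : \sum_(i < 2) G i = G ord0 + G ord_max.
Proof. by rewrite big_ord_recr big_ord1; congr (G _ + G _); apply/val_inj. Qed.

Lemma mul_delta_col (F : fieldType) (X : 'M[F]_2) k : X *m delta_mx k (ord0 : 'I_2) = \sum_(m < 2) X m k *: delta_mx m (ord0 : 'I_2).
Proof.
apply/matrixP => i j; rewrite !mxE summxE big_ord2 !mxE big_ord2 !mxE.
by case: (ord2_cases k) => ->; case: (ord2_cases i) => ->; case: (ord2_cases j) => -> /=; ring.
Qed.

Lemma mul_delta_entry (F : fieldType) (K B : 'M[F]_2) k j r :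
  (K *m delta_mx k ord0 *m B) j r = K j k * B ord0 r.
Proof.
rewrite !mxE big_ord2 !mxE !big_ord2 !mxE.
by case: (ord2_cases k) => -> /=; ring.
Qed.

Lemma char2_two (F : fieldType) : 2%N \in [pchar F] -> (2%:R : F) = 0.
Proof. by move=> /andP[_ /eqP]. Qed.

Lemma tau_form (F : fieldType) (tau : 'M[F]_2 -> 'M[F]_2) :
  2%N \in [pchar F] -> orthogonal_involution tau ->
  exists u w : 'cV[F]_2, w^T *m u = 1%:M /\ tau (u *m w^T) = u *m w^T.
Proof.
move=> ch [[hl hm hi] hns].
have h2 := char2_two ch.
have t0 : tau 0 = 0 := lin0 hl.
have hmm X Y : tau (X *m Y) = tau Y *m tau X by rewrite mulmxE hm.
set d00 : 'M[F]_2 := delta_mx ord0 ord0.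
have [[c r] /= hcr | h0] := pickP (fun p : 'I_2 * 'I_2 => tau d00 p.1 p.2 != 0); last first.
  have : tau d00 = 0.
    by apply/matrixP => i j; have := h0 (i, j); rewrite /= mxE => /negbFE/eqP.
  move=> /(congr1 tau); rewrite hi t0 => /matrixP /(_ ord0 ord0).
  by rewrite !mxE /= => /eqP; rewrite oner_eq0.
pose B : 'M[F]_2 := \matrix_(k, l) tau (delta_mx k ord0) c l.
have key X : B *m tau X = X^T *m B.
  apply/matrixP => k l.
  have -> : (B *m tau X) k l = (tau (delta_mx k ord0) *m tau X) c l.
    by rewrite !mxE; apply: eq_bigr => m _; rewrite mxE.
  rewrite -hmm mul_delta_col (lin_sum hl) summxE !mxE.
  by apply: eq_bigr => m _; rewrite (linZ hl) !mxE.
have hB0 : B ord0 r != 0 by rewrite mxE.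
clearbody B.
have Bu : B \in unitmx.
  rewrite -row_free_unit -kermx_eq0; apply/eqP/matrixP => j k; rewrite [RHS]mxE.
  have : (kermx B *m (delta_mx ord0 k)^T *m B) j r = 0.
    by rewrite -mulmxA -key mulmxA mulmx_ker mul0mx mxE.
  rewrite trmx_delta.
  rewrite mul_delta_entry.
  move/eqP; rewrite mulf_eq0 => /orP[/eqP // | ].
  by rewrite (negbTE hB0).
have tauE X : tau X = invmx B *m X^T *m B.
  by rewrite -mulmxA -key mulKmx.
pose C := invmx B *m B^T.
have Cc X : C *m X = X *m C.
  have := hi X; rewrite !tauE !trmx_mul !trmxK trmx_inv => e.
  have e2 : (C *m X *m (invmx B^T *m B)) *m C = X *m C.
    by rewrite -{2}e /C !mulmxA.
  rewrite -e2 -!mulmxA; congr (_ *m (_ *m _)).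
  rewrite /C !mulmxA.
  have BTu : B^T \in unitmx by rewrite unitmx_tr.
  by rewrite mulmxK // mulmxKV.
have BC : B *m C = B^T by rewrite /C mulKVmx.
clearbody C.
have Cs : C = (C ord0 ord0)%:M.
  have e1 := Cc (delta_mx ord0 ord0); have e2 := Cc (delta_mx ord0 ord_max).
  move/matrixP in e1; move/matrixP in e2.
  have f1 := e1 ord0 ord_max; have f2 := e1 ord_max ord0; have f3 := e2 ord0 ord_max.
  rewrite !mxE !big_ord2 !mxE /= in f1 f2 f3.
  rewrite ?mulr0 ?mul0r ?mulr1 ?mul1r ?addr0 ?add0r in f1 f2 f3.
  apply/matrixP => i j; rewrite !mxE.
  case: (ord2_cases i) => ->; case: (ord2_cases j) => -> /=;
    rewrite ?mulr1n ?mulr0n //; by [rewrite -f1 | rewrite f2 | rewrite f3].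
set l := C ord0 ord0 in Cs.
have BT : B^T = l *: B by rewrite -BC Cs mul_mx_scalar.
have l1 : l = 1.
  have e : B = (l * l) *: B by rewrite -scalerA -BT -{1}(trmxK B) BT linearZ /= BT.
  move/matrixP: e => /(_ ord0 r) e; rewrite [in RHS]mxE in e.
  have ll : l * l = 1.
    apply/eqP; rewrite -subr_eq0; apply/eqP.
    apply: (mulIf hB0); rewrite mulrBl -e mul1r mul0r; exact: subrr.
  have : (l + 1) * (l + 1) = 0.
    have -> : (l + 1) * (l + 1) = l * l + 1 + 2%:R * l by ring.
    by rewrite ll h2 mul0r addr0 -[1 + 1]/(1 *+ 2) -mulr_natl mulr1.
  move/eqP; rewrite mulf_eq0 orbb => /eqP el.
  have -> : l = l + 1 + 1 by rewrite -addrA -[1 + 1]/(1 *+ 2) -mulr_natl mulr1 h2 addr0.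
  by rewrite el add0r.
have Bs : B^T = B by rewrite BT l1 scale1r.
have [i Bii] : exists i, B i i != 0.
  case: (boolP (B ord0 ord0 == 0)) => [/eqP b0|]; last by exists ord0.
  case: (boolP (B ord_max ord_max == 0)) => [/eqP b1|]; last by exists ord_max.
  exfalso; apply: hns; exists d00.
  have e : B *m (d00 + tau d00) = B.
    rewrite mulmxDr key trmx_delta.
    apply/matrixP => a b; rewrite !mxE !big_ord2 !mxE.
    case: (ord2_cases a) => ->; case: (ord2_cases b) => -> /=;
      rewrite ?mulr1n ?mulr0n ?b0 ?b1; ring.
  by rewrite -(mulKmx Bu (_ + _)) e mulVmx.
pose u : 'cV[F]_2 := delta_mx i ord0.
pose w : 'cV[F]_2 := (B i i)^-1 *: (B *m u).
exists u, w; split.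
  apply/matrixP => a b; rewrite !ord1 !mxE big_ord2 !mxE !big_ord2 !mxE.
  move: Bii; case: (ord2_cases i) => -> /= Bii; rewrite ?mulr1n ?mulr0n; field; exact: Bii.
rewrite tauE.
rewrite trmx_mul trmxK /w linearZ /= trmx_mul Bs.
rewrite -scalemxAl -!mulmxA -scalemxAl -!scalemxAr -!mulmxA mulKmx //.
Qed.

Section ONB.
Variable F : fieldType.
Hypothesis h2 : (2%:R : F) = 0.

Lemma c2add (x : F) : x + x = 0.
Proof. by rewrite -mulr2n -mulr_natr h2 mulr0. Qed.

Lemma c2addM m n (X : 'M[F]_(m, n)) : X + X = 0.
Proof. by apply/matrixP => i j; rewrite !mxE c2add. Qed.

Lemma sqr_sum n (a : 'I_n -> F) : (\sum_(i < n) a i) ^+ 2 = \sum_(i < n) a i ^+ 2.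
Proof.
apply: (big_rec2 (fun y1 y2 => y1 ^+ 2 = y2)); first by rewrite expr0n.
move=> i y1 y2 _ <-.
have -> : (a i + y1) ^+ 2 = a i ^+ 2 + y1 ^+ 2 + 2%:R * (a i * y1) by ring.
by rewrite h2 mul0r addr0.
Qed.

Lemma dot_sq n (v : 'cV[F]_n) : v^T *m v = ((\sum_(i < n) v i ord0) ^+ 2)%:M.
Proof.
apply/matrixP => a b; rewrite !ord1 !mxE sqr_sum /=.
by apply: eq_bigr => i _; rewrite mxE expr2.
Qed.

Lemma oneM1_neq0 : (1%:M : 'M[F]_1) != 0.
Proof. by apply/eqP => /matrixP /(_ ord0 ord0); rewrite !mxE /= => /eqP; rewrite oner_eq0. Qed.

Lemma trZ m n a (A : 'M[F]_(m, n)) : (a *: A)^T = a *: A^T.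
Proof. by apply/matrixP => i j; rewrite !mxE. Qed.

Lemma trD m n (A B : 'M[F]_(m, n)) : (A + B)^T = A^T + B^T.
Proof. by apply/matrixP => i j; rewrite !mxE. Qed.

Definition nonalt N (P : 'M[F]_N) := exists v : 'cV[F]_N, v^T *m P *m v != 0.

Lemma dMd N (M : 'M[F]_N) a b :
  (delta_mx a (ord0 : 'I_1))^T *m M *m delta_mx b (ord0 : 'I_1) = (M a b)%:M.
Proof.
rewrite trmx_delta -rowE -colE; apply/matrixP => i j; rewrite !ord1 !mxE /=.
by rewrite mulr1n.
Qed.

Lemma sub_rank1 N (P : 'M[F]_N) (u : 'cV[F]_N) :
  P^T = P -> P *m P = P -> P *m u = u -> u^T *m u = 1%:M ->
  [/\ (P - u *m u^T)^T = P - u *m u^T, (P - u *m u^T) *m (P - u *m u^T) = P - u *m u^T,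
      (P - u *m u^T) *m u = 0, P *m (P - u *m u^T) = P - u *m u^T &
      (P - u *m u^T) *m P = P - u *m u^T].
Proof.
move=> Ps Pi Pu uu.
have uP : u^T *m P = u^T by rewrite -Ps -trmx_mul Pu.
have h1 : (P - u *m u^T) *m u = 0 by rewrite mulmxBl Pu -mulmxA uu mulmx1 subrr.
have h2' : P *m (P - u *m u^T) = P - u *m u^T by rewrite mulmxBr Pi mulmxA Pu.
have h3 : (P - u *m u^T) *m P = P - u *m u^T by rewrite mulmxBl Pi -mulmxA uP.
split => //.
- by rewrite linearB /= Ps trmx_mul trmxK.
- by rewrite mulmxBr h3 mulmxA h1 mul0mx subr0.
Qed.

Lemma onb_step N (P : 'M[F]_N) : P^T = P -> P *m P = P -> nonalt P ->
  exists u : 'cV[F]_N, [/\ P *m u = u, u^T *m u = 1%:M &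
     (P - u *m u^T = 0 \/ nonalt (P - u *m u^T))].
Proof.
move=> Ps Pi [v hv].
pose v0 := P *m v.
have v0v0 : v0^T *m v0 = v^T *m P *m v.
  by rewrite /v0 trmx_mul Ps mulmxA -(mulmxA _ P P) Pi.
set c := \sum_(i < N) v0 i ord0.
have cnz : c != 0.
  apply/eqP => c0; move: hv; rewrite -v0v0 dot_sq -/c c0 expr0n /=.
  by rewrite raddf0 eqxx.
pose u0 := c^-1 *: v0.
have u0u0 : u0^T *m u0 = 1%:M.
  rewrite /u0 -scalemxAr linearZ /= -scalemxAl dot_sq -/c scalerA scale_scalar_mx.
  by congr (_%:M); field.
have Pu0 : P *m u0 = u0 by rewrite /u0 -scalemxAr /v0 mulmxA Pi.
clearbody u0.
have [P0s P0i P0u0 PP0 P0P] := sub_rank1 Ps Pi Pu0 u0u0.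
set P0 := P - u0 *m u0^T in P0s P0i P0u0 PP0 P0P *.
have P0def : P - u0 *m u0^T = P0 by [].
clearbody P0.
case: (boolP (P0 == 0)) => [/eqP z | nz]; first by exists u0; split => //; left; rewrite P0def.
case: (Classical_Prop.classic (nonalt P0)) => [na | al].
  by exists u0; split => //; right; rewrite P0def.
have alt (x : 'cV[F]_N) : x^T *m P0 *m x = 0.
  by apply/eqP; apply/negPn/negP => h; apply: al; exists x.
have [[a b] /= hab | h0] := pickP (fun p : 'I_N * 'I_N => P0 p.1 p.2 != 0); last first.
  by exfalso; move/eqP: nz; apply; apply/matrixP => i j; have := h0 (i, j); rewrite /= => /negbFE/eqP ->; rewrite mxE.
pose x := P0 *m delta_mx b (ord0 : 'I_1).
pose y := (P0 a b)^-1 *: (P0 *m delta_mx a (ord0 : 'I_1)).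
have u0tP0 : u0^T *m P0 = 0 by rewrite -P0s -trmx_mul P0u0 trmx0.
have xtu0 : x^T *m u0 = 0 by rewrite /x trmx_mul P0s -mulmxA P0u0 mulmx0.
have u0tx : u0^T *m x = 0 by rewrite /x mulmxA u0tP0 mul0mx.
have ytu0 : y^T *m u0 = 0 by rewrite /y trZ trmx_mul P0s -scalemxAl -mulmxA P0u0 mulmx0 scaler0.
have u0ty : u0^T *m y = 0 by rewrite /y -scalemxAr mulmxA u0tP0 mul0mx scaler0.
have xty : x^T *m y = 1%:M.
  rewrite /x /y -scalemxAr trmx_mul P0s -mulmxA (mulmxA P0) P0i mulmxA dMd.
  have -> : P0 b a = P0 a b by rewrite -[in LHS]P0s mxE.
  by rewrite scale_scalar_mx mulVf.
have xtx : x^T *m x = 0.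
  by rewrite /x trmx_mul P0s -mulmxA (mulmxA P0) P0i mulmxA alt.
have yty : y^T *m y = 0.
  rewrite /y trZ -scalemxAl -scalemxAr trmx_mul P0s -mulmxA (mulmxA P0) P0i mulmxA alt.
  by rewrite !scaler0.
have Px : P *m x = x by rewrite /x mulmxA PP0.
have Py : P *m y = y by rewrite /y -scalemxAr mulmxA PP0.
exists (u0 + x); split.
- by rewrite mulmxDr Pu0 Px.
- by rewrite trD mulmxDl !mulmxDr u0u0 u0tx xtu0 xtx !addr0.
- right; exists (u0 + y).
  have Pz : P *m (u0 + y) = u0 + y by rewrite mulmxDr Pu0 Py.
  have zz : (u0 + y)^T *m (u0 + y) = 1%:M.
    by rewrite trD mulmxDl !mulmxDr u0u0 u0ty ytu0 yty !addr0.
  have uz : (u0 + x)^T *m (u0 + y) = 0.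
    rewrite trD mulmxDl !mulmxDr u0u0 u0ty xtu0 xty addr0 add0r.
    exact: c2addM.
  rewrite mulmxBr mulmxBl -mulmxA Pz zz -!mulmxA uz !mulmx0 subr0.
  exact: oneM1_neq0.
Qed.

Lemma onb N k (P : 'M[F]_N) : P^T = P -> P *m P = P -> \rank P = k ->
  (P = 0 \/ nonalt P) -> exists U : 'M[F]_(N, k), U^T *m U = 1%:M /\ U *m U^T = P.
Proof.
elim: k P => [|k IH] P Ps Pi rk hP.
  have P0 : P = 0 by apply/eqP; rewrite -mxrank_eq0 rk.
  exists 0; split; first by rewrite [LHS]flatmx0 [RHS]flatmx0.
  by rewrite mul0mx P0.
have na : nonalt P.
  by case: hP => // P0; move: rk; rewrite P0 mxrank0.
have [u [Pu uu hP']] := onb_step Ps Pi na.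
have [P's P'i P'u PP' P'P] := sub_rank1 Ps Pi Pu uu.
have rk' : \rank (P - u *m u^T) = k.
  have h1 : (\rank (P - u *m u^T)%R < \rank P)%N.
    apply: rank_ltmx; rewrite ltmxE; apply/andP; split.
      by rewrite -[X in (X <= _)%MS]P'P submxMl.
    apply/negP => /submxP [D hD].
    have : P *m u = 0 by rewrite hD -mulmxA P'u mulmx0.
    rewrite Pu => u0; move: uu; rewrite u0 trmx0 mul0mx => /esym/eqP.
    by rewrite (negbTE oneM1_neq0).
  have h2' : (\rank P <= \rank (P - u *m u^T)%R + \rank (u *m u^T))%N.
    by rewrite -{1}(subrK (u *m u^T) P) mxrank_add.
  have h3 : (\rank (u *m u^T) <= 1)%N := leq_trans (mxrankM_maxl _ _) (rank_leq_col u).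
  rewrite rk in h1 h2'; lia.
have [U' [hU1 hU2]] := IH _ P's P'i rk' hP'.
have P'U : (P - u *m u^T) *m U' = U' by rewrite -hU2 -mulmxA hU1 mulmx1.
have U'u : U'^T *m u = 0 by rewrite -P'U trmx_mul P's -mulmxA P'u mulmx0.
have uU' : u^T *m U' = 0 by rewrite -(trmxK (u^T *m U')) trmx_mul trmxK U'u trmx0.
exists (row_mx u U').
change ((row_mx u U')^T *m row_mx u U' = (1%:M : 'M_(1 + k)) /\ row_mx u U' *m (row_mx u U')^T = P); split.
  rewrite tr_row_mx mul_col_row uu uU' U'u hU1.
  exact: (esym (scalar_mx_block 1 k 1)).
by rewrite tr_row_mx mul_row_col hU2 addrC subrK.
Qed.

End ONB.

Section Main.
Variables (F : fieldType) (A : falgType F) (sigma : A -> A) (tau : 'M[F]_2 -> 'M[F]_2).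
Variable n : nat.
Variables (f : 'M[A]_2 -> 'M[F]_(2 ^ n)) (ginv : 'M[F]_(2 ^ n) -> 'M[A]_2).
Hypotheses (ch : 2%N \in [pchar F]) (hsig : orthogonal_involution sigma)
  (htau : orthogonal_involution tau) (fK : cancel f ginv) (gK : cancel ginv f)
  (fD : forall M N, f (M + N) = f M + f N)
  (fZ : forall (k : F) M, f (map_mx (fun a => k *: a) M) = k *: f M)
  (fM : forall M N, f (M *m N) = f M *m f N)
  (f1 : f 1%:M = 1%:M)
  (fT : forall M, f (tensor_inv2 sigma tau M) = (f M)^T).
Variables (u w : 'cV[F]_2).
Hypotheses (wu : w^T *m u = 1%:M) (tue : tau (u *m w^T) = u *m w^T).

Let N := (2 ^ n)%N.

Lemma f0 : f 0 = 0.
Proof. by have e := fD 0 0; rewrite addr0 in e; apply: (@addrI _ (f 0)); rewrite addr0 -e. Qed.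
Lemma fN M : f (- M) = - f M.
Proof. by apply: (@addrI _ (f M)); rewrite -fD !subrr f0. Qed.
Lemma fB M M' : f (M - M') = f M - f M'.
Proof. by rewrite fD fN. Qed.
Lemma finj0 M : f M = 0 -> M = 0.
Proof. by move=> h; rewrite -(fK M) h -f0 fK. Qed.

Lemma inv1 (B : lalgType F) (s : B -> B) : involution1 s -> s 1 = 1.
Proof.
case=> _ hm hi.
have e := hm (s 1) 1; rewrite mulr1 hi mulr1 in e.
by rewrite -e.
Qed.

Definition E (X : 'M[F]_2) : 'M[A]_2 := map_mx (in_alg A) X.
Definition psi (a : A) : 'M[F]_N := f a%:M.
Definition phi (X : 'M[F]_2) : 'M[F]_N := f (E X).

Lemma E1 : E 1%:M = 1%:M.
Proof. exact: map_mx1. Qed.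
Lemma EM X Y : E (X *m Y) = E X *m E Y.
Proof. exact: map_mxM. Qed.
Lemma EB X Y : E (X - Y) = E X - E Y.
Proof. exact: map_mxB. Qed.

Lemma Ecomm a X : a%:M *m E X = E X *m a%:M.
Proof.
apply/matrixP => i j; rewrite !mxE !big_ord2 !mxE.
case: (ord2_cases i) => ->; case: (ord2_cases j) => -> /=;
  by rewrite ?mulr1n ?mulr0n ?mul0r ?mulr0 ?add0r ?addr0 mulr_algl mulr_algr.
Qed.

Lemma sig_lin : forall (k : F) (x y : A), sigma (k *: x + y) = k *: sigma x + sigma y.
Proof. by case: hsig => -[]. Qed.
Lemma sig0 : sigma 0 = 0.
Proof.
have e := sig_lin 1 0 0; rewrite scale1r addr0 in e.
have e2 : sigma 0 + sigma 0 = sigma 0 + 0 by rewrite addr0 {3}e scale1r.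
exact: addrI e2.
Qed.
Lemma sig1 : sigma 1 = 1.
Proof. by case: hsig => h _; apply: inv1. Qed.
Lemma sig_alg k : sigma k%:A = k%:A.
Proof. by have := sig_lin k 1 0; rewrite addr0 sig0 addr0 sig1. Qed.

Lemma tau_lin : forall (k : F) (x y : 'M[F]_2), tau (k *: x + y) = k *: tau x + tau y.
Proof. by case: htau => -[]. Qed.
Lemma tau0 : tau 0 = 0.
Proof.
have e := tau_lin 1 0 0; rewrite scale1r addr0 in e.
have e2 : tau 0 + tau 0 = tau 0 + 0 by rewrite addr0 {3}e scale1r.
exact: addrI e2.
Qed.
Lemma tau1 : tau 1%:M = 1%:M.
Proof. by case: htau => h _; apply: (inv1 h). Qed.

Lemma tauD x y : tau (x + y) = tau x + tau y.
Proof. by have := tau_lin 1 x y; rewrite !scale1r. Qed.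

Lemma d1 : delta_mx ord0 ord0 + delta_mx ord_max ord_max = 1%:M :> 'M[F]_2.
Proof.
apply/matrixP => i j; rewrite !mxE.
by case: (ord2_cases i) => ->; case: (ord2_cases j) => -> /=; rewrite ?addr0 ?add0r.
Qed.

Lemma T1 a : tensor_inv2 sigma tau a%:M = (sigma a)%:M.
Proof.
apply/matrixP => k l; rewrite !mxE !big_ord2 !mxE /= !mulr1n !mulr0n sig0 !scaler0 addr0 add0r.
have -> : tau (delta_mx ord0 ord0) k l *: sigma a + tau (delta_mx ord_max ord_max) k l *: sigma a
  = (tau (delta_mx ord0 ord0) + tau (delta_mx ord_max ord_max)) k l *: sigma a.
  by rewrite mxE scalerDl.
by rewrite -tauD d1 tau1 mxE scaler_nat.
Qed.

Lemma T2 X : tensor_inv2 sigma tau (E X) = E (tau X).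
Proof.
apply/matrixP => k l; rewrite [RHS]mxE [in RHS](matrix_sum_delta X).
have tsum : forall (G : 'I_2 -> 'M[F]_2), tau (\sum_(i < 2) G i) = \sum_(i < 2) tau (G i).
  by move=> G; rewrite !big_ord2 tauD.
have tZ : forall (c : F) Y, tau (c *: Y) = c *: tau Y.
  by move=> c Y; have := tau_lin c Y 0; rewrite !addr0 tau0 addr0.
rewrite tsum summxE big_ord2 !tsum !summxE !big_ord2 !tZ !mxE /=.
rewrite [LHS]big_ord2 !big_ord2 !mxE /= !sig_alg.
rewrite !scalerA !scalerDl; congr (_ + _ + (_ + _)); congr (_ *: _); exact: mulrC.
Qed.

Lemma psiL k x y : psi (k *: x + y) = k *: psi x + psi y.
Proof.
rewrite /psi -fZ -fD; congr f; apply/matrixP => i j; rewrite !mxE.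
by rewrite mulrnDl scalerMnr.
Qed.
Lemma psi0 : psi 0 = 0.
Proof. by rewrite /psi -f0; congr f; apply/matrixP => i j; rewrite !mxE mul0rn. Qed.
Lemma psiB x y : psi (x - y) = psi x - psi y.
Proof.
have := psiL (-1) y x; rewrite scaleN1r addrC => ->.
by rewrite scaleN1r addrC.
Qed.
Lemma psiM x y : psi (x * y) = psi x *m psi y.
Proof. by rewrite /psi scalar_mxM fM. Qed.
Lemma psi1 : psi 1 = 1%:M.
Proof. exact: f1. Qed.
Lemma psiT a : psi (sigma a) = (psi a)^T.
Proof. by rewrite /psi -T1 fT. Qed.
Lemma phiM X Y : phi (X *m Y) = phi X *m phi Y.
Proof. by rewrite /phi EM fM. Qed.
Lemma phiT X : phi (tau X) = (phi X)^T.
Proof. by rewrite /phi -T2 fT. Qed.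
Lemma phi1 : phi 1%:M = 1%:M.
Proof. by rewrite /phi E1 f1. Qed.
Lemma phiB X Y : phi (X - Y) = phi X - phi Y.
Proof. by rewrite /phi EB fB. Qed.
Lemma psi_comm a X : psi a *m phi X = phi X *m psi a.
Proof. by rewrite /psi /phi -!fM Ecomm. Qed.

Definition e := u *m w^T.
Definition P := phi e.

Lemma eE i j : e i j = u i ord0 * w j ord0.
Proof. by rewrite !mxE big_ord1 mxE. Qed.

Lemma ee : e *m e = e.
Proof. by rewrite /e mulmxA -(mulmxA u) wu mulmx1. Qed.

Lemma PT : P^T = P.
Proof. by rewrite /P -phiT tue. Qed.
Lemma PP : P *m P = P.
Proof. by rewrite /P -phiM ee. Qed.

Definition mm (M : 'M[A]_2) : A :=
  \sum_(p < 2) \sum_(q < 2) (w p ord0 * u q ord0) *: M p q.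

Lemma EMe M : E e *m M *m E e = (mm M)%:M *m E e.
Proof.
apply/matrixP => k l; rewrite mul_scalar_mx [LHS]mxE [RHS]mxE /mm mulr_suml.
under eq_bigr => b _ do rewrite mxE mulr_suml.
rewrite exchange_big /=; apply: eq_bigr => a _.
rewrite mulr_suml; apply: eq_bigr => b _.
rewrite !mxE /= mulr_algl mulr_algr mulr_algr !scalerA; congr (_ *: _).
rewrite !big_ord1 !mxE; ring.
Qed.

Lemma surj Y : P *m Y *m P = psi (mm (ginv Y)) *m P.
Proof. by rewrite -[X in P *m X *m P](gK Y) /P /phi /psi -!fM EMe. Qed.

Lemma e_nz : exists k l, e k l != 0.
Proof.
have [[k l] /= h | h0] := pickP (fun p : 'I_2 * 'I_2 => e p.1 p.2 != 0).
  by exists k, l.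
exfalso.
have e0 : e = 0 by apply/matrixP => i j; have := h0 (i, j); rewrite /= => /negbFE/eqP ->; rewrite mxE.
have : w^T *m e *m u = 1%:M by rewrite /e mulmxA wu mul1mx wu.
by rewrite e0 mulmx0 mul0mx => /esym/eqP; rewrite (negbTE (oneM1_neq0 F)).
Qed.

Lemma inj a : psi a *m P = 0 -> a = 0.
Proof.
rewrite /psi /P /phi -fM => /finj0; rewrite mul_scalar_mx => /matrixP h.
have [k [l hkl]] := e_nz.
have := h k l; rewrite !mxE /= mulr_algr big_ord1 mxE -eE => /eqP; rewrite scaler_eq0 (negbTE hkl) /=.
by move/eqP.
Qed.

Lemma rankP : (\rank P + \rank P = 2 ^ n)%N.
Proof.
pose u' : 'cV[F]_2 := \col_i (if i == ord0 then w ord_max ord0 else - w ord0 ord0).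
pose w' : 'cV[F]_2 := \col_i (if i == ord0 then u ord_max ord0 else - u ord0 ord0).
have s1 : w ord0 ord0 * u ord0 ord0 + w ord_max ord0 * u ord_max ord0 = 1.
  by move/matrixP: wu => /(_ ord0 ord0); rewrite !mxE big_ord2 !mxE.
have h1 : 1%:M - e = u' *m w'^T.
  apply/matrixP => i j; rewrite !mxE big_ord1 !mxE big_ord1 !mxE.
  case: (ord2_cases i) => ->; case: (ord2_cases j) => -> /=; rewrite ?mulr1n ?mulr0n -?s1; ring.
have h2 : w'^T *m u' = 1%:M.
  apply/matrixP => i j; rewrite !ord1 !mxE big_ord2 !mxE /= mulr1n -s1; ring.
pose X := phi (u *m w'^T).
pose Y := phi (u' *m w^T).
have XY : X *m Y = P by rewrite /X /Y -phiM mulmxA -(mulmxA u) h2 mulmx1.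
have YX : Y *m X = 1%:M - P.
  by rewrite /X /Y -phiM mulmxA -(mulmxA u') wu mulmx1 -h1 phiB phi1.
have PX : P *m X = X by rewrite /X /P -phiM /e mulmxA -(mulmxA u) wu mulmx1.
have YP : Y *m P = Y by rewrite /Y /P -phiM /e mulmxA -(mulmxA u') wu mulmx1.
have r1 : (\rank P <= \rank X)%N by rewrite -XY mxrankM_maxl.
have r2 : (\rank X <= \rank P)%N by rewrite -PX mxrankM_maxl.
have r3 : (\rank X <= \rank Y)%N.
  by rewrite -PX -XY -mulmxA (leq_trans (mxrankM_maxr _ _)) // mxrankM_maxl.
have r4 : (\rank Y <= \rank X)%N.
  by rewrite -YP -XY mulmxA (leq_trans (mxrankM_maxl _ _)) // mxrankM_maxr.
have r5 : (\rank (1%:M - P)%R <= \rank Y)%N by rewrite -YX mxrankM_maxl.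
have r6 : (\rank Y <= \rank (1%:M - P)%R)%N.
  by have := mxrankM_maxl (Y *m X) Y; rewrite -mulmxA XY YP YX.
have s2 : (2 ^ n <= \rank P + \rank (1%:M - P)%R)%N.
  by rewrite -{1}(mxrank1 F (2 ^ n)) -{1}(addrNK P 1%:M) addrC mxrank_add.
have s3 : (\rank P + \rank (1%:M - P)%R - 2 ^ n <= 0)%N.
  by have := mxrank_mul_min P (1%:M - P); rewrite mulmxBr mulmx1 PP subrr mxrank0.
lia.
Qed.

Lemma psiD x y : psi (x + y) = psi x + psi y.
Proof. by have := psiL 1 x y; rewrite !scale1r. Qed.

Lemma P_comm a : psi a *m P = P *m psi a.
Proof. exact: psi_comm. Qed.

Lemma P_nonalt : nonalt P.
Proof.
apply: NNPP => hn.
have alt (v : 'cV[F]_(2 ^ n)) : v^T *m P *m v = 0.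
  by apply/eqP; apply/negPn/negP => h; apply: hn; exists v.
have diag i : P i i = 0.
  by have := alt (delta_mx i ord0); rewrite dMd => /matrixP /(_ ord0 ord0); rewrite !mxE /= mulr1n.
pose X0 : 'M[F]_(2 ^ n) := \matrix_(i, j) if (i < j)%N then P i j else 0.
have X0P : X0 + X0^T = P.
  apply/matrixP => i j; rewrite !mxE.
  case: (ltngtP i j) => h.
  - by rewrite addr0.
  - by rewrite add0r -[in RHS]PT mxE.
  - have ij : i = j by apply/val_inj.
    by rewrite ij diag addr0.
have hx := surj X0.
set x := mm (ginv X0) in hx.
have XX : P *m X0 *m P + (P *m X0 *m P)^T = P.
  by rewrite !trmx_mul PT -mulmxA -mulmxDr -mulmxDl X0P !PP.
rewrite hx trmx_mul PT -psiT -P_comm in XX.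
have : psi (x + sigma x - 1) *m P = 0.
  by rewrite psiB psiD psi1 mulmxBl mulmxDl XX mul1mx subrr.
move/inj => /eqP; rewrite subr_eq0 => /eqP h1.
by case: hsig => _; apply; exists x.
Qed.

Lemma main_iso : iso_transpose sigma (2 ^ n.-1).
Proof.
have h2 := char2_two ch.
have rk : \rank P = (2 ^ n.-1)%N.
  have := rankP; case: n => [|m] /=; first lia.
  rewrite expnS; lia.
have [U [UU UUT]] := onb h2 PT PP rk (or_intror P_nonalt).
have PU : P *m U = U by rewrite -UUT -mulmxA UU mulmx1.
have UP : U^T *m P = U^T by rewrite -PT -trmx_mul PU.
pose g a := U^T *m psi a *m U.
pose h Y := mm (ginv (U *m Y *m U^T)).
have gB a b : g (a - b) = g a - g b by rewrite /g psiB mulmxBr mulmxBl.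
have gh : cancel h g.
  move=> Y; have hs := surj (U *m Y *m U^T).
  have e1 : psi (h Y) *m U = psi (h Y) *m P *m U by rewrite -mulmxA PU.
  rewrite /g -mulmxA e1 -hs.
  by rewrite !mulmxA UP UU mul1mx -!mulmxA PU UU mulmx1.
have ginj a b : g a = g b -> a = b.
  move=> eab; apply/eqP; rewrite -subr_eq0; apply/eqP; apply: inj.
  have : g (a - b) = 0 by rewrite gB eab subrr.
  rewrite /g => e0.
  have -> : psi (a - b) *m P = U *m (U^T *m psi (a - b) *m U) *m U^T.
    by rewrite !mulmxA UUT -(mulmxA _ U U^T) UUT -P_comm -mulmxA PP.
  by rewrite e0 mulmx0 mul0mx.
exists g; split.
- by exists h => // a; apply: ginj; rewrite gh.
- move=> k x y; rewrite /g psiL mulmxDr mulmxDl.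
  by rewrite -scalemxAr -scalemxAl.
- move=> x y; rewrite /g psiM.
  rewrite !mulmxA -(mulmxA _ U U^T) UUT -(mulmxA _ P) -P_comm mulmxA.
  by rewrite -(mulmxA _ P U) PU.
- by rewrite /g psi1 mulmx1 UU.
- by move=> x; rewrite /g psiT !trmx_mul trmxK mulmxA.
Qed.

End Main.

Unset Implicit Arguments.

Theorem lemma5p9 (F : fieldType) (A : falgType F) (sigma : A -> A) (n : nat) :
  2%N \in [pchar F] ->
  central_simple A ->
  orthogonal_involution sigma ->
  (exists tau : 'M[F]_2 -> 'M[F]_2,
      orthogonal_involution tau /\ iso_M2A_transpose sigma tau (2 ^ n)) ->
  iso_transpose sigma (2 ^ n.-1).
Proof.
move=> ch _ hsig [tau [htau [f [[ginv fK gK] [fD fZ fM f1 fT]]]]].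
have [u [w [wu tue]]] := tau_form ch htau.
by eapply main_iso; eassumption.
Qed.
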